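(* For every $v\in\mathbb C$, in the ring of formal power series in $D$, \[ \Bigl(1-\tfrac{Y_{n-2}(v+4)}{Y_{n-1}(v+5)Y_n(v+5)}D^2\Bigr)\Bigl(1-\tfrac{Y_{n-1}(v+3)}{Y_n(v+5)}D^2\Bigr)\Bigl(1-\tfrac{Y_n(v+3)}{Y_n(v+7)}D^4\Bigr)^{-1}\Bigl(1-\tfrac{Y_n(v+3)}{Y_{n-1}(v+5)}D^2\Bigr)\Bigl(1-\tfrac{Y_{n-1}(v+3)Y_n(v+3)}{Y_{n-2}(v+4)}D^2\Bigr) \] \[ =1-\sum_{j\ge0}\Bigl(k_{n-1}(v+4j+5)h_n(v+3)+(1-\delta_{j0})k_n(v+4j+5)h_{n-1}(v+3)\Bigr)D^{4j+2} \] \[ \quad+\sum_{j\ge0}\Bigl(k_{n-1}(v+4j+7)h_{n-1}(v+3)+k_n(v+4j+7)h_n(v+3)-\delta_{j0}\tfrac{Y_{n-2}(v+4)}{Y_{n-2}(v+6)}\Bigr)D^{4j+4}. \]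
   Context: Fix $n\ge4$. Let $Q_a(u)$ ($1\le a\le n$, $u\in\mathbb C$) be algebraically independent commuting indeterminates and $Y_a(u)=Q_a(u-1)/Q_a(u+1)$, $\mathcal Y=\mathbb Z[Y_a(u)^{\pm1}]$. Formal power series $\sum_{j\ge0}c_j(u)D^j$ with $c_j(u)$ in the fraction field of $\mathcal Y$ are multiplied using $D\,c(u)=c(u+1)D$ (here all coefficients depend on the parameter $v$, and $D\,c(v)=c(v+1)D$); $(1-cD^4)^{-1}=\sum_{k\ge0}(cD^4)^k$. For $a\in\{n-1,n\}$: $h_a(u)=Y_a(u)+\frac{Y_{n-2}(u+1)}{Y_a(u+2)}$ and $k_a(u)=Y_a(u)^{-1}+\frac{Y_a(u-2)}{Y_{n-2}(u-1)}$. *)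

(* Defs.v *)
From Stdlib Require Import Reals ZArith.
From Coquelicot Require Import Complex.
From mathcomp Require Import all_boot all_algebra.
From mathcomp Require Import mpoly.

Set Implicit Arguments.
Unset Strict Implicit.
Unset Printing Implicit Defensive.

Import GRing.Theory.
Local Open Scope ring_scope.

Definition sh (u : C) (z : Z) : C := Cplus u (RtoC (IZR z)).

Section QSystem.
Variable K : fieldType.

Definition alg_indep (n : nat) (Q : nat -> C -> K) : Prop :=
  forall (k : nat) (idx : 'I_k -> nat * C),
    injective idx ->
    (forall i, (1 <= (idx i).1 <= n)%N) ->
    forall p : {mpoly int[k]},
      (map_mpoly (fun z : int => z%:~R : K) p).@[fun i => Q (idx i).1 (idx i).2] = 0 ->
      p = 0.

Variable Q : nat -> C -> K.

Definition Y (a : nat) (u : C) : K := Q a (sh u (-1)) / Q a (sh u 1).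

(* h_a, k_a for a in {n-1, n} (n-2 is passed as m2) *)
Definition hfun (m2 a : nat) (u : C) : K := Y a u + Y m2 (sh u 1) / Y a (sh u 2).
Definition kfun (m2 a : nat) (u : C) : K := (Y a u)^-1 + Y a (sh u (-2)) / Y m2 (sh u (-1)).

(* Formal power series sum_j c_j(v) D^j, coefficients depending on v,
   with D c(v) = c(v+1) D. *)
Definition ps := nat -> C -> K.

Definition ps_one : ps := fun m _ => (m == 0)%:R.
Definition ps_mono (c : C -> K) (d : nat) : ps := fun m v => if m == d then c v else 0.
Definition ps_sub (a b : ps) : ps := fun m v => a m v - b m v.
Definition ps_mul (a b : ps) : ps :=
  fun m v => \sum_(i < m.+1) a i v * b (m - i)%N (sh v (Z.of_nat i)).
Definition ps_pow (X : ps) (k : nat) : ps := iter k (ps_mul X) ps_one.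
Definition one_minus (c : C -> K) (d : nat) : ps := ps_sub ps_one (ps_mono c d).
(* (1 - c D^d)^{-1} := sum_{k >= 0} (c D^d)^k  (for d >= 1 the k-th term
   only contributes in degrees >= k, so the coefficient of D^m is a finite sum) *)
Definition geom_inv (c : C -> K) (d : nat) : ps :=
  fun m v => \sum_(k < m.+1) ps_pow (ps_mono c d) k m v.

End QSystem.

(* Main.v *)
Require Import Defs.
From Stdlib Require Import Reals ZArith.
From Coquelicot Require Import Complex.
From mathcomp Require Import all_boot all_algebra.
From mathcomp Require Import mpoly.
From mathcomp Require Import ring zify.
Import GRing.Theory.
Local Open Scope ring_scope.

Lemma sh_sh (u : C) (a b : Z) : sh (sh u a) b = sh u (Z.add a b).
Proof. by rewrite /sh -Cplus_assoc -RtoC_plus -plus_IZR. Qed.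

Lemma sh0 (u : C) : sh u Z0 = u.
Proof. by rewrite /sh Cplus_0_r. Qed.

Lemma sum_pick (K : fieldType) (m j : nat) (F : nat -> K) :
  \sum_(i < m.+1) (if (nat_of_ord i == j)%N then F i else 0) = if (j <= m)%N then F j else 0.
Proof.
elim: m => [|m IH].
  rewrite big_ord_recr big_ord0 /= add0r.
  by case: j => [|j].
rewrite big_ord_recr /= IH.
case: (ltngtP j m.+1) => H.
- by rewrite -ltnS H addr0.
- have -> : (j <= m)%N = false by apply/negbTE; rewrite -ltnNge; apply: ltn_trans H. by rewrite addr0.
- by subst j; rewrite ltnn add0r.
Qed.

Lemma subeq (m i d : nat) : (i <= m)%N -> ((m - i == d) = (d <= m) && (i == m - d))%N.
Proof. move=> H; apply/eqP/andP; [move=> E; split; [lia|apply/eqP; lia] | case=> ? /eqP; lia]. Qed.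

Lemma mul_omR (K : fieldType) (a : ps K) (c : C -> K) (d m : nat) (v : C) :
  ps_mul a (one_minus c d) m v =
  a m v - (if (d <= m)%N then a (m - d)%N v * c (sh v (Z.of_nat (m - d))) else 0).
Proof.
rewrite /ps_mul /one_minus /ps_sub /ps_one /ps_mono.
under eq_bigr => i _ do rewrite mulrBr.
rewrite sumrB; congr (_ - _).
  rewrite (eq_bigr (fun i : 'I_m.+1 => if nat_of_ord i == m then a m v else 0)).
    by rewrite (sum_pick _ _ _ (fun _ => a m v)) leqnn.
  move=> i _; have Hi := ltn_ord i; rewrite ltnS in Hi.
  have -> : ((m - i == 0) = (nat_of_ord i == m))%N by apply/eqP/eqP; lia.
  by case: eqP => [->|_]; rewrite ?mulr1 ?mulr0.
rewrite (eq_bigr (fun i : 'I_m.+1 => if nat_of_ord i == (m - d)%N then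
    (if (d <= m)%N then a (m - d)%N v * c (sh v (Z.of_nat (m - d))) else 0) else 0)).
  by rewrite (sum_pick _ _ _ (fun _ => if (d <= m)%N then a (m - d)%N v * c (sh v (Z.of_nat (m - d))) else 0)) leq_subr.
move=> i _; have Hi := ltn_ord i; rewrite ltnS in Hi.
rewrite subeq //; case: (d <= m)%N; last by rewrite /= mulr0 if_same.
case: eqP => [->|_] /=; by rewrite ?mulr0.
Qed.

Lemma mul_monoL (K : fieldType) (b : ps K) (c : C -> K) (d m : nat) (v : C) :
  ps_mul (ps_mono c d) b m v =
  (if (d <= m)%N then c v * b (m - d)%N (sh v (Z.of_nat d)) else 0).
Proof.
rewrite /ps_mul /ps_mono.
rewrite (eq_bigr (fun i : 'I_m.+1 => if nat_of_ord i == d then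
    c v * b (m - d)%N (sh v (Z.of_nat d)) else 0)).
  by rewrite (sum_pick _ _ _ (fun _ => c v * b (m - d)%N (sh v (Z.of_nat d)))).
by move=> i _; case: eqP => [->|_]; rewrite ?mul0r.
Qed.

Lemma mul_sp3 (K : fieldType) (a b : ps K) (al be : K) (m : nat) (v : C) :
  (forall i, a i v = (if i == 0%N then 1 else 0) - (if i == 2%N then al else 0)
                      + (if i == 4%N then be else 0)) ->
  ps_mul a b m v = b m v - (if (2 <= m)%N then al * b (m - 2)%N (sh v (Z.of_nat 2)) else 0)
     + (if (4 <= m)%N then be * b (m - 4)%N (sh v (Z.of_nat 4)) else 0).
Proof.
move=> Ha; rewrite /ps_mul.
under eq_bigr => i _ do rewrite Ha mulrDl mulrBl !(fun_if (fun x => x * _)) !mul0r mul1r.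
rewrite big_split sumrB /= (sum_pick _ _ _ (fun i => b (m-i)%N (sh v (Z.of_nat i)))) (sum_pick _ _ _ (fun i => al * b (m-i)%N (sh v (Z.of_nat i)))) (sum_pick _ _ _ (fun i => be * b (m-i)%N (sh v (Z.of_nat i)))) subn0 sh0.
by [].
Qed.

Lemma shN (u : C) (a b : nat) :
  sh (sh u (Z.of_nat a)) (Z.of_nat b) = sh u (Z.of_nat (a + b)).
Proof. by rewrite sh_sh Nat2Z.inj_add. Qed.

Lemma ps_powS (K : fieldType) (X : ps K) (j : nat) : ps_pow X j.+1 = ps_mul X (ps_pow X j).
Proof. by []. Qed.

Lemma pow_tele (K : fieldType) (y : C -> K) (hy : forall u, y u != 0) (j m : nat) (u : C) :
  ps_pow (ps_mono (fun u => y (sh u (Z.of_nat 3)) / y (sh u (Z.of_nat 7))) 4) j m u =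
  if (m == 4 * j)%N then y (sh u (Z.of_nat 3)) / y (sh u (Z.of_nat (3 + 4 * j))) else 0.
Proof.
elim: j m u => [|j IH] m u.
  by rewrite /= /ps_one mulfV //; case: (m == 0%N).
rewrite ps_powS mul_monoL IH !shN.
have E : (((4 <= m) && (m - 4 == 4 * j)) = (m == 4 * j.+1))%N.
  by apply/andP/eqP => [[/leP ? /eqP]|->]; [lia | split; [apply/leP; lia| apply/eqP; lia]].
case: (boolP (4 <= m)%N) => H4.
  rewrite -E H4 andTb; case: (m - 4 == 4 * j)%N; last by rewrite mulr0.
  have -> : (4 + 3 = 7)%N by [].
  have -> : (4 + (3 + 4 * j) = 3 + 4 * j.+1)%N by lia.
  by rewrite mulrA divfK.
have -> : (m == 4 * j.+1)%N = false by apply/negbTE; rewrite -E (negbTE H4).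
by [].
Qed.

Lemma geom_val (K : fieldType) (y : C -> K) (hy : forall u, y u != 0) (m : nat) (u : C) :
  geom_inv (fun u => y (sh u (Z.of_nat 3)) / y (sh u (Z.of_nat 7))) 4 m u =
  if (m %% 4 == 0)%N then y (sh u (Z.of_nat 3)) / y (sh u (Z.of_nat (3 + m))) else 0.
Proof.
rewrite /geom_inv.
rewrite (eq_bigr (fun j : 'I_m.+1 => if nat_of_ord j == (m %/ 4)%N then
   (if (m %% 4 == 0)%N then y (sh u (Z.of_nat 3)) / y (sh u (Z.of_nat (3 + m))) else 0) else 0)).
  by rewrite (sum_pick _ _ _ (fun _ => if (m %% 4 == 0)%N then y (sh u (Z.of_nat 3)) / y (sh u (Z.of_nat (3 + m))) else 0)) leq_div.
move=> j _; rewrite pow_tele //; move: (nat_of_ord j) => {}j.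
case: eqP => H.
  have -> : (m %/ 4 = j)%N by rewrite H mulKn.
  have -> : (m %% 4 = 0)%N by rewrite H modnMr.
  by rewrite -H !eqxx.
case: eqP => H2 //.
have -> : (m %% 4 == 0)%N = false by apply/negbTE/eqP; lia.
by [].
Qed.

Lemma Qnz (n : nat) (K : fieldType) (Q : nat -> C -> K) (hQ : alg_indep n Q) (a : nat) (w : C) :
  (1 <= a <= n)%N -> Q a w != 0.
Proof.
move=> Ha; apply/eqP => H0.
have inj : injective (fun _ : 'I_1 => (a, w)) by move=> i j _; rewrite (ord1 i) (ord1 j).
have := hQ 1%N (fun _ => (a, w)) inj (fun _ => Ha) ('X_(ord0)).
rewrite map_mpolyX mevalXU /= => /(_ H0) H.
have := congr1 (fun p : {mpoly int[1]} => p.@[fun _ => 1]) H.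
by rewrite /= mevalXU meval0.
Qed.

Lemma Ynz (n : nat) (K : fieldType) (Q : nat -> C -> K) (hQ : alg_indep n Q) (a : nat) (w : C) :
  (1 <= a <= n)%N -> Y Q a w != 0.
Proof. by move=> Ha; rewrite /Y mulf_neq0 ?invr_eq0 ?(Qnz _ _ _ hQ). Qed.

Ltac dec_ifs := repeat match goal with
  | |- context[if ?b then _ else _] =>
     first [ have -> : b = true by (apply/idP; lia) | have -> : b = false by (apply/negbTE; lia) ]
  | |- context[nat_of_bool ?b] =>
     first [ have -> : b = true by (apply/idP; lia) | have -> : b = false by (apply/negbTE; lia) ]
  end.

Lemma natr_false (K : fieldType) : ((nat_of_bool false)%:R : K) = 0. Proof. by []. Qed.
Lemma natr_true (K : fieldType) : ((nat_of_bool true)%:R : K) = 1. Proof. by []. Qed.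

Definition pt0 (v : C) (k : Z) := sh v k.
Definition ptm (v : C) (m : nat) (k : Z) := sh v (Z.add (Z.of_nat m) k).

Ltac normpt v m m0 :=
  repeat match goal with |- context[sh v ?z] =>
    let f := eval pattern m in z in
    lazymatch f with ?F _ =>
      let k0 := eval vm_compute in (F m0) in
      let k1 := eval vm_compute in (F (m0 + 4)%N) in
      first [ constr_eq k0 k1;
              rewrite (_ : sh v z = pt0 v k0); last by (rewrite /pt0; f_equal; lia)
            | let kk := eval vm_compute in (Z.sub k0 (Z.of_nat m0)) in
              rewrite (_ : sh v z = ptm v m kk); last by (rewrite /ptm; f_equal; lia) ]
    end
  end.

Ltac normpt0 v :=
  repeat match goal with |- context[sh v ?z] =>
      let k0 := eval vm_compute in z in
      rewrite (_ : sh v z = pt0 v k0); last by rewrite /pt0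
  end.

Theorem mainTheorem14 (n : nat) (hn : (4 <= n)%N) (K : fieldType)
  (Q : nat -> C -> K) (hQ : alg_indep n Q) (v : C) :
  let Y := Y Q in
  let h := hfun Q (n - 2)%N in
  let k := kfun Q (n - 2)%N in
  let s (z : nat) (u : C) := sh u (Z.of_nat z) in
  let LHS :=
    ps_mul
      (ps_mul
        (ps_mul
          (ps_mul
            (one_minus (fun u => Y (n - 2)%N (s 4%N u) / (Y (n - 1)%N (s 5%N u) * Y n (s 5%N u))) 2)
            (one_minus (fun u => Y (n - 1)%N (s 3%N u) / Y n (s 5%N u)) 2))
          (geom_inv (fun u => Y n (s 3%N u) / Y n (s 7%N u)) 4))
        (one_minus (fun u => Y n (s 3%N u) / Y (n - 1)%N (s 5%N u)) 2))
      (one_minus (fun u => Y (n - 1)%N (s 3%N u) * Y n (s 3%N u) / Y (n - 2)%N (s 4%N u)) 2) in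
  let RHS (m : nat) (u : C) : K :=
    (m == 0)%:R
    - (if (m %% 4 == 2)%N then
         let j := (m %/ 4)%N in
         k (n - 1)%N (s (4 * j + 5)%N u) * h n (s 3%N u)
         + (1 - (j == 0)%:R) * (k n (s (4 * j + 5)%N u) * h (n - 1)%N (s 3%N u))
       else 0)
    + (if (m %% 4 == 0)%N && (0 < m)%N then
         let j := (m %/ 4 - 1)%N in
         k (n - 1)%N (s (4 * j + 7)%N u) * h (n - 1)%N (s 3%N u)
         + k n (s (4 * j + 7)%N u) * h n (s 3%N u)
         - (j == 0)%:R * (Y (n - 2)%N (s 4%N u) / Y (n - 2)%N (s 6%N u))
       else 0) in
  forall m : nat, LHS m v = RHS m v.
Proof.
 
cbv beta zeta.
move=> m.
rewrite !mul_omR.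
set a := (fun u => Y Q (n - 2)%N _ / _).
set b := (fun u => Y Q (n - 1)%N _ / Y Q n _).
have hAB : forall i, ps_mul (one_minus a 2) (one_minus b 2) i v =
  (if i == 0%N then 1 else 0) - (if i == 2%N then a v + b v else 0)
  + (if i == 4%N then a v * b (sh v (Z.of_nat 2)) else 0).
  move=> i; rewrite mul_omR /one_minus /ps_sub /ps_one /ps_mono.
  case: i => [|[|[|[|[|i]]]]] //=; rewrite ?subrr ?subr0 ?add0r ?addr0 ?mul1r ?mulN1r ?opprD ?opprK ?mul0r ?oppr0 ?sh0 ?mulNr ?opprK //.
rewrite !(mul_sp3 _ _ _ _ _ _ _ hAB).
have hYn : forall u, Y Q n u != 0 by move=> u; apply: Ynz hQ _ _ _; lia.
rewrite !(geom_val _ _ hYn) /a /b /kfun /hfun; cbv beta; rewrite !sh_sh.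
have h2 : (1 <= n - 2 <= n)%N by apply/andP; split; lia.
have h1 : (1 <= n - 1 <= n)%N by apply/andP; split; lia.
have h0 : (1 <= n <= n)%N by apply/andP; split; lia.
case: (ltnP m 8) => Hm.
  do 8 (case: m Hm => [|m] Hm; [dec_ifs; normpt0 v; rewrite ?natr_false ?natr_true;
    field; rewrite ?(Ynz _ _ _ hQ) // | ]).
  by [].
have : (m %% 4 < 4)%N by rewrite ltn_mod.
case Hr : (m %% 4)%N => [|[|[|[|r]]]] // _.
- dec_ifs; normpt v m 100%N; rewrite ?natr_false ?natr_true; field; rewrite ?(Ynz _ _ _ hQ) //.
- dec_ifs; normpt v m 101%N; rewrite ?natr_false ?natr_true; field; rewrite ?(Ynz _ _ _ hQ) //.
- dec_ifs; normpt v m 102%N; rewrite ?natr_false ?natr_true; field; rewrite ?(Ynz _ _ _ hQ) //.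
- dec_ifs; normpt v m 103%N; rewrite ?natr_false ?natr_true; field; rewrite ?(Ynz _ _ _ hQ) //.
Qed.
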